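(* Let $T>0$, $A\in C([0,T];\mathbb{R}^{n\times n})$, $B\in C([0,T];\mathbb{R}^{n\times m})$, $E\in C([0,T];\mathbb{R}^{n\times\ell})$, and compact convex nonempty $\mathbb{U}\subset\mathbb{R}^m$, $\mathbb{D}\subset\mathbb{R}^\ell$. Assume that for every $t\in[0,T]$ the set $\mathbb{W}(t)=B(t)\mathbb{U}\ominus(-E(t)\mathbb{D})$ is nonempty. Let $L_g\ge0$, $\gamma_k\in\mathbb{R}$, $n_k\in\mathbb{N}$, points $\bar x_{i,k}\in\mathbb{R}^n$ and controls $\omega_{i,k}\in\mathscr{W}[0,T]$ ($1\le i\le n_k$) be given, let $\xi^\star_{i,k}$ be the solution on $[0,T]$ of $\dot\xi(s)=A(s)\xi(s)+\omega_{i,k}(s)$, $\xi(T)=\bar x_{i,k}$, and $\Omega^\star_k(t)=\mathrm{conv}(\{\xi^\star_{i,k}(t)\}_{i=1}^{n_k})$. Then $\bar v_k(t,x)=L_g\inf_{\xi\in\Omega^\star_k(t)}\|\Phi_A(T,t)(x-\xi)\|+\gamma_k$ is continuous on $[0,T]\times\mathbb{R}^n$.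
   Context: $\Phi_A(s,\tau)$ is the state-transition matrix of $\dot y(s)=A(s)y(s)$. For $Y,Z\subseteq\mathbb{R}^n$: $Y\ominus Z=\{c:\{c\}\oplus Z\subseteq Y\}$ where $\{c\}\oplus Z=\{c+z:z\in Z\}$, and $PY=\{Py:y\in Y\}$. $\mathscr{W}[0,T]$ is the set of measurable $\omega:[0,T]\to\mathbb{R}^n$ with $\omega(s)\in\mathbb{W}(s)$ for all $s$. *)

(* Defs.v *)
From HB Require Import structures.
From mathcomp Require Import all_boot all_order all_algebra.
From mathcomp Require Import all_classical all_reals all_analysis.
Set Implicit Arguments. Unset Strict Implicit. Unset Printing Implicit Defensive.
Import Order.TTheory GRing.Theory Num.Theory.
Import numFieldNormedType.Exports.
Local Open Scope classical_set_scope.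
Local Open Scope ring_scope.

Section Defs.
Variable R : realType.
Notation leb := (@lebesgue_measure R).

Definition enorm n (x : 'cV[R]_n) : R := Num.sqrt (\sum_i (x i 0) ^+ 2).

Definition mx_image p q (P : 'M[R]_(p, q)) (Y : set 'cV[R]_q) : set 'cV[R]_p :=
  [set P *m y | y in Y].

Definition mink_diff p (Y Z : set 'cV[R]_p) : set 'cV[R]_p :=
  [set c | forall z, Z z -> Y (c + z)].

Definition conv_pts p N (pts : 'I_N -> 'cV[R]_p) : set 'cV[R]_p :=
  [set c | exists lam : 'I_N -> R, (forall i, 0 <= lam i) /\
     \sum_i lam i = 1 /\ c = \sum_i lam i *: pts i].

Definition oint (a b : R) (f : R -> R) : R :=
  if a <= b then Rintegral leb `[a, b] f else - Rintegral leb `[b, a] f.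

(* Phi is the state-transition matrix of y' = A y on [0,T]:
   for each tau in [0,T], s |-> Phi s tau solves Y' = A Y, Y(tau)=I on [0,T]
   (in integral form; A is continuous so this is the classical solution). *)
Definition is_stm n (T : R) (A : R -> 'M[R]_n) (Phi : R -> R -> 'M[R]_n) : Prop :=
  forall tau, 0 <= tau <= T ->
    (forall i j, leb.-integrable `[0, T] (fun r => ((A r *m Phi r tau) i j)%:E)) /\
    forall s, 0 <= s <= T -> forall i j,
      Phi s tau i j = (1%:M : 'M[R]_n) i j + oint tau s (fun r => (A r *m Phi r tau) i j).

(* xi is the (Caratheodory) solution on [0,T] of xi' = A xi + w, xi(T) = xbar *)
Definition is_sol n (T : R) (A : R -> 'M[R]_n) (w : R -> 'cV[R]_n)
  (xbar : 'cV[R]_n) (xi : R -> 'cV[R]_n) : Prop :=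
  (forall j, leb.-integrable `[0, T] (fun s => ((A s *m xi s + w s) j 0)%:E)) /\
  forall t, 0 <= t <= T -> forall j,
    xi t j 0 = xbar j 0 + oint T t (fun s => (A s *m xi s + w s) j 0).

Definition adm_ctrl n (T : R) (W : R -> set 'cV[R]_n) (w : R -> 'cV[R]_n) : Prop :=
  (forall j, measurable_fun `[0, T] (fun s => w s j 0)) /\
  forall s, 0 <= s <= T -> W s (w s).

End Defs.

(* Main.v *)
Require Import Defs.
From HB Require Import structures.
From mathcomp Require Import all_boot all_order all_algebra.
From mathcomp Require Import all_classical all_reals all_analysis.
From mathcomp Require Import lra.
Import Order.TTheory GRing.Theory Num.Theory.
Import numFieldNormedType.Exports.
Local Open Scope classical_set_scope.
Local Open Scope ring_scope.
Set Implicit Arguments. Unset Strict Implicit. Unset Printing Implicit Defensive.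
Section Aux.
Variable R : realType.

Lemma cvg_bsum (X : Type) (F : set_system X) (FF : Filter F) (I : Type)
  (r : seq I) (f : I -> X -> R) (l : I -> R) :
  (forall i, f i x @[x --> F] --> l i) ->
  (\sum_(i <- r) f i x) @[x --> F] --> \sum_(i <- r) l i.
Proof.
move=> H; elim: r => [|a r IH].
  rewrite big_nil; under eq_fun do rewrite big_nil; exact: cvg_cst.
rewrite big_cons; under eq_fun do rewrite big_cons.
exact: cvgD.
Qed.

Lemma cvg_bprod (X : Type) (F : set_system X) (FF : Filter F) (I : Type)
  (r : seq I) (P : pred I) (f : I -> X -> R) (l : I -> R) :
  (forall i, f i x @[x --> F] --> l i) ->
  (\prod_(i <- r | P i) f i x) @[x --> F] --> \prod_(i <- r | P i) l i.
Proof.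
move=> H; elim: r => [|a r IH].
  rewrite big_nil; under eq_fun do rewrite big_nil; exact: cvg_cst.
rewrite big_cons; under eq_fun do rewrite big_cons.
case: (P a); last exact: IH.
exact: cvgM.
Qed.

Lemma cvg_bsumP (X : Type) (F : set_system X) (FF : Filter F) (I : Type)
  (r : seq I) (P : pred I) (f : I -> X -> R) (l : I -> R) :
  (forall i, f i x @[x --> F] --> l i) ->
  (\sum_(i <- r | P i) f i x) @[x --> F] --> \sum_(i <- r | P i) l i.
Proof.
move=> H; elim: r => [|a r IH].
  rewrite big_nil; under eq_fun do rewrite big_nil; exact: cvg_cst.
rewrite big_cons; under eq_fun do rewrite big_cons.
case: (P a); last exact: IH.
exact: cvgD.
Qed.

Lemma cvg_det (X : Type) (F : set_system X) (FF : Filter F) k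
  (M : X -> 'M[R]_k) (L : 'M[R]_k) :
  (forall i j, M x i j @[x --> F] --> L i j) ->
  \det (M x) @[x --> F] --> \det L.
Proof.
move=> H; rewrite /determinant; under eq_fun do rewrite /determinant.
apply: cvg_bsumP => s; apply: cvgM; first exact: cvg_cst.
by apply: cvg_bprod => i.
Qed.

Lemma cvg_cofactor (X : Type) (F : set_system X) (FF : Filter F) k
  (M : X -> 'M[R]_k) (L : 'M[R]_k) i0 j0 :
  (forall i j, M x i j @[x --> F] --> L i j) ->
  cofactor (M x) i0 j0 @[x --> F] --> cofactor L i0 j0.
Proof.
move=> H; rewrite expand_cofactor; under eq_fun do rewrite expand_cofactor.
apply: cvg_bsumP => s; apply: cvgM; first exact: cvg_cst.
by apply: cvg_bprod => i.
Qed.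

Lemma cvg_invmx (X : Type) (F : set_system X) (FF : Filter F) k
  (M : X -> 'M[R]_k) (L : 'M[R]_k) :
  (\forall x \near F, M x \in unitmx) -> L \in unitmx ->
  (forall i j, M x i j @[x --> F] --> L i j) ->
  forall i j, invmx (M x) i j @[x --> F] --> invmx L i j.
Proof.
move=> Hu HL H i j.
have e : \forall x \near F, (\det (M x))^-1 * cofactor (M x) j i = invmx (M x) i j.
  by near=> x; rewrite /invmx (near Hu x) // !mxE.
apply: cvg_trans; first exact: (near_eq_cvg e).
rewrite /invmx HL !mxE.
apply: cvgM; last exact: cvg_cofactor.
apply: cvgV; last exact: cvg_det.
by rewrite -unitfE -unitmxE.
Unshelve. all: by end_near. Qed.

Notation leb := (@lebesgue_measure R).
Implicit Types (f : R -> R) (a b s c r x T : R).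

Definition Pint (f : R -> R) (x : R) : R := Rintegral leb `[0, x] f.

Lemma integ_sub T f a b : leb.-integrable `[0, T] (EFin \o f) ->
  0 <= a -> b <= T -> leb.-integrable `[a, b] (EFin \o f).
Proof.
move=> H a0 bT; apply: integrableS H => //.
by apply: subset_itv; rewrite bnd_simp.
Qed.

Lemma oint_P0 T f a b : leb.-integrable `[0, T] (EFin \o f) ->
  0 <= a -> a <= b -> b <= T -> Rintegral leb `[a, b] f = Pint f b - Pint f a.
Proof.
move=> H a0 ab bT; rewrite /Pint.
rewrite -[LHS]Rintegral_itv_obnd_cbnd; last first.
  have I1 := integ_sub H a0 bT.
  apply: integrableS I1 => //.
  by apply: subset_itv; rewrite bnd_simp.
rewrite -(@Rintegral_itvB R f (BLeft 0) (BRight b) a) //.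
- exact: (integ_sub H (lexx 0) bT).
Qed.

Lemma oint_P T f a b : leb.-integrable `[0, T] (EFin \o f) ->
  0 <= a <= T -> 0 <= b <= T -> oint a b f = Pint f b - Pint f a.
Proof.
move=> H /andP[a0 aT] /andP[b0 bT]; rewrite /oint.
case: ifPn => ab; first exact: (oint_P0 H).
rewrite (oint_P0 H) //; first by rewrite opprB.
by rewrite ltW // ltNge.
Qed.

Lemma Pint_cont T f : 0 <= T -> leb.-integrable `[0, T] (EFin \o f) ->
  {within `[0, T], continuous (Pint f)}.
Proof.
move=> T0 H; exact: (@parameterized_integral_continuous R 0 T f T0 H).
Qed.


Lemma Rint_bound f a s c : leb.-integrable `[a, s] (EFin \o f) -> a <= s -> 0 <= c ->
  (forall r, a <= r <= s -> `|f r| <= c) ->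
  `|Rintegral leb `[a, s] f| <= (s - a) * c.
Proof.
move=> H as0 c0 Hb.
case/integrableP: (H) => mf _.
rewrite -lee_fin.
have -> : (`|Rintegral leb `[a, s] f|%:E = `|(\int[leb]_(x in `[a, s]) (EFin \o f) x)%E|%E).
  rewrite /Rintegral -abse_EFin fineK //; exact: integrable_fin_num.
apply: le_trans; first exact: le_abse_integral.
apply: le_trans; first apply: (integral_le_bound c%:E) => //.
  apply: aeW => x /= xin; rewrite lee_fin; apply: Hb.
  by move: xin; rewrite /= in_itv /=.
have Hm : forall m : \bar R, m = (s - a)%:E -> (c%:E * m <= ((s - a) * c)%:E)%E.
  by move=> m ->; rewrite -EFinM lee_fin mulrC.
apply: Hm.
apply: eq_trans (lebesgue_measure_itv `[a, s]) _.
rewrite /= lte_fin.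
case: ltP => hs; first by rewrite -EFinD.
have -> : s = a by apply/eqP; rewrite eq_le as0 hs.
by rewrite subrr.
Qed.


Lemma oint_bound T f a s c : leb.-integrable `[0, T] (EFin \o f) ->
  0 <= a <= T -> 0 <= s <= T -> 0 <= c ->
  (forall r, 0 <= r <= T -> `|r - a| <= `|s - a| -> `|f r| <= c) ->
  `|oint a s f| <= `|s - a| * c.
Proof.
move=> H /andP[a0 aT] /andP[s0 sT] c0 Hb; rewrite /oint.
case: ifPn => as0.
  rewrite [`|s - a|]ger0_norm ?subr_ge0 //.
  apply: Rint_bound => //; first exact: integ_sub H a0 sT.
  move=> r /andP[ar rs]; apply: Hb.
    by rewrite (le_trans a0 ar) (le_trans rs sT).
  by rewrite !ger0_norm ?subr_ge0 // lerD2r.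
have sa : s <= a by rewrite ltW // ltNge.
rewrite normrN [`|s - a|]ler0_norm ?subr_le0 // opprB.
apply: Rint_bound => //; first exact: integ_sub H s0 aT.
move=> r /andP[sr ra]; apply: Hb.
  by rewrite (le_trans s0 sr) (le_trans ra aT).
by rewrite !ler0_norm ?subr_le0 // !opprB lerD2l lerN2.
Qed.


Definition cw T (g : R -> R) :=
  forall t, 0 <= t <= T -> g x @[x --> within `[0, T] (nbhs t)] --> g t.

Lemma cw_of T g : {within `[0, T], continuous g} -> cw T g.
Proof.
move/subspace_continuousP => H t tin; apply: H.
by rewrite /= in_itv /=.
Qed.

Lemma of_cw T g : cw T g -> {within `[0, T], continuous g}.
Proof.
move=> H; apply/subspace_continuousP => t tin; apply: H.
by move: tin; rewrite /= in_itv /=.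
Qed.

Lemma cw_sub T g lo hi : 0 <= lo -> hi <= T -> cw T g ->
  {within `[lo, hi], continuous g}.
Proof.
move=> l0 hT H; apply/subspace_continuousP => t tin.
have tin' : 0 <= t <= T.
  move: tin; rewrite /= in_itv /= => /andP[a b].
  by rewrite (le_trans l0 a) (le_trans b hT).
apply: (cvg_trans _ (H t tin')).
apply: cvg_app; apply: within_subset => x /=; rewrite !in_itv /= => /andP[a b].
by rewrite (le_trans l0 a) (le_trans b hT).
Qed.

Lemma cw_eq T g h : (forall s, 0 <= s <= T -> g s = h s) -> cw T h -> cw T g.
Proof.
move=> E H t tin; rewrite E //.
apply: (cvg_trans _ (H t tin)).
apply: fmap_within_eq => x; rewrite inE /= in_itv /= => xin.
exact: E.
Qed.

Lemma cw_cst T c : cw T (fun _ => c).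
Proof. by move=> t _; exact: cvg_cst. Qed.

Lemma cw_D T g h : cw T g -> cw T h -> cw T (fun x => g x + h x).
Proof. by move=> Hg Hh t tin; apply: cvgD; [exact: Hg|exact: Hh]. Qed.

Lemma cw_M T g h : cw T g -> cw T h -> cw T (fun x => g x * h x).
Proof. by move=> Hg Hh t tin; apply: cvgM; [exact: Hg|exact: Hh]. Qed.

Lemma cw_N T g : cw T g -> cw T (fun x => - g x).
Proof. by move=> Hg t tin; apply: cvgN; exact: Hg. Qed.

Lemma cw_norm T g : cw T g -> cw T (fun x => `|g x|).
Proof. by move=> Hg t tin; apply: cvg_norm; exact: Hg. Qed.

Lemma cw_sum T (I : Type) (r : seq I) (g : I -> R -> R) :
  (forall i, cw T (g i)) -> cw T (fun x => \sum_(i <- r) g i x).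
Proof. by move=> H t tin; apply: cvg_bsum => i; exact: H. Qed.

Lemma cw_Pint T f : 0 <= T -> leb.-integrable `[0, T] (EFin \o f) -> cw T (Pint f).
Proof. by move=> T0 H; apply: cw_of; exact: Pint_cont. Qed.

Lemma cw_oint T f a : 0 <= T -> leb.-integrable `[0, T] (EFin \o f) ->
  0 <= a <= T -> cw T (fun s => oint a s f).
Proof.
move=> T0 H ain.
apply: (@cw_eq _ _ (fun s => Pint f s + - Pint f a)).
  by move=> s sin; rewrite (oint_P H).
by apply: cw_D; [exact: cw_Pint|exact: cw_cst].
Qed.


Lemma dsum_const p q (c : R) : \sum_(i < p) \sum_(j < q) c = (p * q)%:R * c.
Proof.
rewrite big_const_ord big_const_ord.
by rewrite !iter_addr_0 -mulrnA mulr_natl mulnC.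
Qed.

Lemma term_le_sum (I : finType) (F : I -> R) i0 :
  (forall i, 0 <= F i) -> F i0 <= \sum_i F i.
Proof.
by move=> H; rewrite (bigD1 i0) //= lerDl sumr_ge0.
Qed.

Lemma uniq_lin T K p q (Z : R -> 'M[R]_(p, q)) (G : 'I_p -> 'I_q -> R -> R) tau0 :
  0 < T -> 0 <= K -> 0 <= tau0 <= T -> Z tau0 = 0 ->
  (forall i j, leb.-integrable `[0, T] (EFin \o G i j)) ->
  (forall s, 0 <= s <= T -> forall i j, Z s i j = Z tau0 i j + oint tau0 s (G i j)) ->
  (forall r, 0 <= r <= T -> forall i j, `|G i j r| <= K * \sum_k `|Z r k j|) ->
  forall s, 0 <= s <= T -> Z s = 0.
Proof.
move=> T0 K0 tin Zt0 HG Hrep Hb.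
have Zdiff : forall a s, 0 <= a <= T -> 0 <= s <= T -> forall i j,
    Z s i j - Z a i j = oint a s (G i j).
  move=> a s ain sin i j; rewrite (Hrep s) // (Hrep a) // !(oint_P (HG i j)) //.
  by rewrite Zt0 mxE !add0r opprB addrA subrK.
have Zc : forall i j, cw T (fun s => Z s i j).
  move=> i j; apply: (@cw_eq _ _ (fun s => Z tau0 i j + oint tau0 s (G i j))).
    by move=> s sin; rewrite Hrep.
  apply: cw_D; first exact: cw_cst.
  by apply: cw_oint => //; exact: ltW.
pose g r := \sum_i \sum_j `|Z r i j|.
have gc : cw T g.
  by apply: cw_sum => i; apply: cw_sum => j; apply: cw_norm.
have g0 : forall r, 0 <= g r by move=> r; do 2 apply: sumr_ge0 => ? _.
have Zg : forall r i j, `|Z r i j| <= g r.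
  move=> r i j.
  apply: (le_trans (term_le_sum (F := fun j => `|Z r i j|) j _)) => //.
  apply: (term_le_sum (F := fun i => \sum_j `|Z r i j|) i) => ?.
  by apply: sumr_ge0.
have Zg' : forall r j, \sum_k `|Z r k j| <= g r.
  move=> r j; rewrite /g; apply: ler_sum => k _.
  by apply: (term_le_sum (F := fun j => `|Z r k j|) j).
pose N := (p * q)%:R * K.
have N0 : 0 <= N by rewrite /N mulr_ge0.
pose h := (2 * (N + 1))^-1.
have h0 : 0 < h by rewrite /h invr_gt0 mulr_gt0 // ltr_wpDl.
have hN : N * h <= 2^-1.
  rewrite /h invfM mulrA ler_pdivrMr ?ltr_wpDl //.
  by rewrite mulrC ler_wpM2l ?invr_ge0 // lerDl.
have local : forall a, 0 <= a <= T -> Z a = 0 ->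
    forall r, 0 <= r <= T -> `|r - a| <= h -> Z r = 0.
  move=> a ain Za.
  pose lo := Num.max 0 (a - h); pose hi := Num.min T (a + h).
  have inI : forall r, (r \in `[lo, hi]) = (0 <= r <= T) && (`|r - a| <= h).
    move=> r; rewrite in_itv /= ge_max le_min ler_distl.
    by case: (0 <= r); case: (a - h <= r); case: (r <= T); case: (r <= a + h).
  have lohi : lo <= hi.
    have : a \in `[lo, hi] by rewrite inI ain subrr normr0 ltW.
    by rewrite in_itv /= => /andP[x y]; exact: le_trans x y.
  have lo0 : 0 <= lo by rewrite /lo le_max lexx.
  have hiT : hi <= T by rewrite /hi ge_min lexx.
  have [r0 r0in r0max] := EVT_max lohi (cw_sub lo0 hiT gc).
  have := r0in; rewrite inI => /andP[r0T r0h].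
  have gr0 : g r0 <= N * h * g r0.
    have -> : N * h * g r0 = \sum_(i < p) \sum_(j < q) (h * (K * g r0)).
      by rewrite dsum_const /N -!mulrA; congr (_ * _); rewrite mulrCA.
    apply: ler_sum => i _; apply: ler_sum => j _.
    have -> : Z r0 i j = Z r0 i j - Z a i j by rewrite Za mxE subr0.
    rewrite Zdiff //.
    have Kg0 : 0 <= K * g r0 by rewrite mulr_ge0.
    have Hb' : forall r, 0 <= r <= T -> `|r - a| <= `|r0 - a| -> `|G i j r| <= K * g r0.
      move=> r rT rr0; apply: le_trans (Hb r rT i j) _.
      apply: ler_wpM2l => //; apply: le_trans (Zg' r j) _.
      apply: r0max; rewrite inI rT /=; exact: le_trans rr0 r0h.
    apply: le_trans (oint_bound (HG i j) ain r0T Kg0 Hb') _.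
    by rewrite ler_wpM2r.
  have gr00 : g r0 = 0.
    have h1 : g r0 <= 2^-1 * g r0.
      apply: le_trans gr0 _; exact: ler_wpM2r.
    have := g0 r0; lra.
  move=> r rT rh; apply/matrixP => i j; rewrite mxE.
  apply/eqP; rewrite -normr_le0 -gr00.
  apply: le_trans (Zg r i j) _; apply: r0max; rewrite inI rT rh.
  done.
have chain : forall M : nat, forall s, 0 <= s <= T ->
    `|s - tau0| <= M.+1%:R * h -> Z s = 0.
  elim=> [|M IH] s sT hs.
    by apply: (local tau0) => //; rewrite mul1r in hs.
  case: (lerP `|s - tau0| (M.+1%:R * h)) => hs'; first exact: IH.
  have hM : 0 <= M%:R :> R by [].
  move: (sT) (tin) => /andP[s0 sT'] /andP[t0 tT].
  rewrite -!natr1 in hs hs'.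
  have [st|st] := lerP tau0 s.
    rewrite ger0_norm ?subr_ge0 // in hs hs'.
    have ain : 0 <= s - h <= T by apply/andP; split; nra.
    apply: (local (s - h)) => //.
      apply: IH => //; rewrite ger0_norm; first by rewrite -natr1; nra.
      by rewrite subr_ge0; nra.
    have -> : s - (s - h) = h by lra.
    by rewrite ger0_norm ?(ltW h0).
  have st' : s <= tau0 by exact: ltW.
  rewrite ler0_norm ?subr_le0 // in hs hs'.
  have ain : 0 <= s + h <= T by apply/andP; split; nra.
  apply: (local (s + h)) => //.
    apply: IH => //; rewrite ler0_norm; first by rewrite -natr1; nra.
    by rewrite subr_le0; nra.
  have -> : s - (s + h) = - h by lra.
  by rewrite normrN ger0_norm ?(ltW h0).
move=> s sT.
have x0 : 0 <= `|s - tau0| / h by rewrite divr_ge0 // ltW.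
have := archi_boundP x0; set Nb := Num.Def.archi_bound _ => HN.
apply: (chain Nb) => //.
rewrite -ler_pdivrMr //; apply: le_trans (ltW HN) _.
by rewrite ler_nat.
Qed.



Section Lin.
Variables a0 b0 : R.
Local Notation D := ([set` `[a0, b0]] : set R).

Lemma integR_D f g : leb.-integrable D (EFin \o f) -> leb.-integrable D (EFin \o g) ->
  leb.-integrable D (EFin \o (fun x => f x + g x)).
Proof.
move=> Hf Hg; apply: (eq_integrable _ _ _ _ (integrableD _ Hf Hg)) => //.
Qed.

Lemma integR_B f g : leb.-integrable D (EFin \o f) -> leb.-integrable D (EFin \o g) ->
  leb.-integrable D (EFin \o (fun x => f x - g x)).
Proof.
move=> Hf Hg; apply: (eq_integrable _ _ _ _ (integrableB _ Hf Hg)) => //.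
Qed.

Lemma integR_Zr f c : leb.-integrable D (EFin \o f) ->
  leb.-integrable D (EFin \o (fun x => f x * c)).
Proof.
move=> Hf; apply: (eq_integrable _ _ _ _ (integrableZr _ c Hf)) => //.
Qed.

Lemma integR_sum (I : Type) (rr : seq I) (fs : I -> R -> R) (c : I -> R) :
  (forall k, leb.-integrable D (EFin \o fs k)) ->
  leb.-integrable D (EFin \o (fun x => \sum_(k <- rr) fs k x * c k)).
Proof.
move=> H; elim: rr => [|a rr IH].
  apply: (eq_integrable _ (cst 0)) => //; last exact: integrable0.
  by move=> x _; rewrite /= big_nil.
have Hn : leb.-integrable D (EFin \o (fun x => fs a x * c a + \sum_(k <- rr) fs k x * c k)).
  by apply: integR_D => //; apply: integR_Zr.
apply: (eq_integrable _ _ _ _ Hn) => //.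
by move=> x _; rewrite /= big_cons.
Qed.

Lemma Rint_sum (I : Type) (rr : seq I) (fs : I -> R -> R) (c : I -> R) :
  (forall k, leb.-integrable D (EFin \o fs k)) ->
  Rintegral leb D (fun x => \sum_(k <- rr) fs k x * c k) =
  \sum_(k <- rr) Rintegral leb D (fs k) * c k.
Proof.
move=> H; elim: rr => [|a rr IH].
  rewrite big_nil; under eq_Rintegral do rewrite big_nil.
  by rewrite Rintegral_cst // mul0r.
under eq_Rintegral do rewrite big_cons.
rewrite big_cons RintegralD //; last exact: integR_sum.
  by rewrite RintegralZr // IH.
exact: integR_Zr.
Qed.

End Lin.

Lemma integ_lin T (I : Type) (rr : seq I) (fs : I -> R -> R) (c : I -> R) g :
  (forall k, leb.-integrable `[0, T] (EFin \o fs k)) ->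
  leb.-integrable `[0, T] (EFin \o g) ->
  leb.-integrable `[0, T] (EFin \o (fun r => \sum_(k <- rr) fs k r * c k - g r)).
Proof.
by move=> H1 H2; apply: integR_B => //; apply: integR_sum.
Qed.

Lemma Pint_lin T (I : Type) (rr : seq I) (fs : I -> R -> R) (c : I -> R) g x :
  (forall k, leb.-integrable `[0, T] (EFin \o fs k)) ->
  leb.-integrable `[0, T] (EFin \o g) -> 0 <= x <= T ->
  Pint (fun r => \sum_(k <- rr) fs k r * c k - g r) x =
  \sum_(k <- rr) Pint (fs k) x * c k - Pint g x.
Proof.
move=> H1 H2 /andP[x0 xT]; rewrite /Pint.
have H1' : forall k, leb.-integrable `[0, x] (EFin \o fs k).
  by move=> k; exact: integ_sub (H1 k) (lexx 0) xT.
have H2' := integ_sub H2 (lexx 0) xT.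
rewrite RintegralB //; last exact: integR_sum.
by rewrite Rint_sum.
Qed.


Lemma cw_mx T k l (M : R -> 'M[R]_(k, l)) : {within `[0, T], continuous M} ->
  forall i j, cw T (fun r => M r i j).
Proof.
move=> HM i j t tin.
have H := (subspace_continuousP _ _).1 HM t.
have {}H := H (_ : _); rewrite /= in_itv /= in H.
exact: (@continuous_cvg _ _ _ _ _ M (fun N : 'M[R]_(k, l) => N i j) (M t)
  (@coord_continuous R k l i j (M t)) (H tin)).
Qed.

Lemma mxBE k l (M N : 'M[R]_(k, l)) i j : (M - N) i j = M i j - N i j.
Proof. by rewrite !mxE. Qed.

Lemma stm_cont n T (A : R -> 'M[R]_n) Phi :
  0 < T -> {within `[0, T], continuous A} -> is_stm T A Phi ->
  forall i j, cw T (fun t => Phi T t i j).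
Proof.
move=> T0 HA HS.
have T0' : 0 <= T := ltW T0.
have hTT : 0 <= T <= T by apply/andP; split.
have zin : (0:R) <= 0 <= T by rewrite lexx T0'.
have Ac := cw_mx HA.
pose gA r := \sum_i \sum_k `|A r i k|.
have gAc : cw T gA.
  by apply: cw_sum => i; apply: cw_sum => k; apply: cw_norm; apply: Ac.
have [rm _ rmax] := EVT_max T0' (of_cw gAc).
pose K := gA rm.
have Ab : forall r, 0 <= r <= T -> forall i k, `|A r i k| <= K.
  move=> r rin i k; apply: le_trans (rmax r _); last by rewrite in_itv.
  apply: (le_trans (term_le_sum (F := fun k => `|A r i k|) k _)) => //.
  apply: (term_le_sum (F := fun i => \sum_k `|A r i k|) i) => ?.
  by apply: sumr_ge0.
have K0 : 0 <= K by rewrite /K /gA; do 2 apply: sumr_ge0 => ? _.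
pose F tau i j r := (A r *m Phi r tau) i j.
have HF : forall tau, 0 <= tau <= T -> forall i j, leb.-integrable `[0, T] (EFin \o F tau i j).
  by move=> tau tin i j; exact: (HS tau tin).1.
have Prep : forall tau, 0 <= tau <= T -> forall s, 0 <= s <= T ->
    Phi s tau = 1%:M + \matrix_(i, j) (Pint (F tau i j) s - Pint (F tau i j) tau).
  move=> tau tin s sin; apply/matrixP => i j.
  by rewrite ((HS tau tin).2 s sin i j) (oint_P (HF tau tin i j)) // !mxE.
have Pdiag : forall tau, 0 <= tau <= T -> Phi tau tau = 1%:M.
  move=> tau tin; rewrite (Prep tau tin tau tin); apply/matrixP => i j.
  by rewrite !mxE subrr addr0.
pose Y s := Phi s 0.
have Ycw : forall i j, cw T (fun s => Y s i j).
  move=> i j; apply: (@cw_eq _ _ (fun s => (1%:M : 'M[R]_n) i j + oint 0 s (F 0 i j))).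
    by move=> s sin; rewrite /Y ((HS 0 zin).2 s sin i j).
  apply: cw_D; first exact: cw_cst.
  by apply: cw_oint => //; exact: HF.
have Claim1 : forall tau, 0 <= tau <= T -> forall s, 0 <= s <= T ->
    Phi s tau *m Y tau = Y s.
  move=> tau tin.
  have Yt := Prep 0 zin tau tin.
  set c := Y tau.
  pose Z s := Phi s tau *m c - Y s.
  pose G i j r := \sum_(k <- index_enum 'I_n) F tau i k r * c k j - F 0 i j r.
  have Zt : Z tau = 0 by rewrite /Z Pdiag // mul1mx subrr.
  have HG : forall i j, leb.-integrable `[0, T] (EFin \o G i j).
    by move=> i j; apply: integ_lin => [k|]; [exact: HF|exact: HF].
  have Hrep : forall s, 0 <= s <= T -> forall i j, Z s i j = Z tau i j + oint tau s (G i j).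
    move=> s sin i j; rewrite Zt (_ : (0 : 'M[R]_n) i j = 0) ?mxE // add0r (oint_P (HG i j)) //.
    rewrite !(Pint_lin _ _ (fun k => HF tau tin i k) (HF 0 zin i j)) //.
    rewrite (Prep tau tin s sin) /Y (Prep 0 zin s sin).
    have e1 : \sum_(i0 < n) (i == i0)%:R * c i0 j = c i j.
      transitivity ((1%:M *m c) i j); last by rewrite mul1mx.
      by rewrite mxE; apply: eq_bigr => k _; rewrite mxE.
    have cij : c i j = (i == j)%:R + (Pint (F 0 i j) tau - Pint (F 0 i j) 0).
      by rewrite /c /Y Yt !mxE.
    under eq_bigr do rewrite !mxE mulrDl mulrBl.
    rewrite big_split /= sumrB e1 !mxE cij.
    lra.
  have Hb : forall r, 0 <= r <= T -> forall i j, `|G i j r| <= K * \sum_k `|Z r k j|.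
    move=> r rin i j.
    have -> : G i j r = (A r *m Z r) i j.
      rewrite /Z mulmxBr mulmxA mxBE /G /F /Y; congr (_ - _).
      by rewrite [RHS]mxE.
    rewrite mxE mulr_sumr; apply: le_trans (ler_norm_sum _ _ _) _.
    apply: ler_sum => k _; rewrite normrM; apply: ler_wpM2r => //.
    exact: Ab.
  move=> s sin; apply/eqP; rewrite -subr_eq0; apply/eqP.
  exact: (uniq_lin T0 K0 tin Zt HG Hrep Hb).
have Yunit : forall tau, 0 <= tau <= T -> Y tau \in unitmx.
  move=> tau tin; have := Claim1 tau tin 0 zin.
  rewrite {2}/Y Pdiag // => /mulmx1_unit; by case.
have PhiT : forall tau, 0 <= tau <= T -> Phi T tau = Y T *m invmx (Y tau).
  move=> tau tin; rewrite -(Claim1 tau tin T hTT) mulmxK //.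
  exact: Yunit.
move=> i j.
apply: (@cw_eq _ _ (fun t => \sum_(k <- index_enum 'I_n) Y T i k * invmx (Y t) k j)).
  by move=> t tin; rewrite PhiT // mxE.
apply: cw_sum => k; apply: cw_M; first exact: cw_cst.
move=> t tin.
apply: (@cvg_invmx _ _ _ _ Y (Y t)).
- rewrite near_withinE; apply: nearW => x xin.
  by apply: Yunit; move: xin; rewrite /= in_itv.
- exact: Yunit.
- by move=> i' j'; apply: Ycw.
Qed.


Section Enorm.
Variable k : nat.
Implicit Types (u v : 'cV[R]_k).

Lemma CS (a b : 'I_k -> R) :
  (\sum_i a i * b i) ^+ 2 <= (\sum_i a i ^+ 2) * (\sum_i b i ^+ 2).
Proof.
set A := \sum_i a i ^+ 2; set B := \sum_i a i * b i; set C := \sum_i b i ^+ 2.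
have E : forall t, \sum_i (t * a i + b i) ^+ 2 = t ^+ 2 * A + (t * B) *+ 2 + C.
  move=> t; under eq_bigr do rewrite sqrrD.
  rewrite !big_split /= -mulr2n /A /B /C !mulr_sumr.
  congr (_ + _ *+ 2 + _); apply: eq_bigr => i _; first by rewrite exprMn.
  by rewrite mulrA.
have A0 : 0 <= A by apply: sumr_ge0 => i _; exact: sqr_ge0.
have C0 : 0 <= C by apply: sumr_ge0 => i _; exact: sqr_ge0.
have Pos : forall t, 0 <= t ^+ 2 * A + (t * B) *+ 2 + C.
  by move=> t; rewrite -E; apply: sumr_ge0 => i _; exact: sqr_ge0.
have [A00|Ap] := eqVneq A 0.
  have a0 : forall i, a i = 0.
    move=> i; apply/eqP; rewrite -sqrf_eq0; apply/eqP.
    by apply: (psumr_eq0P _ A00) => // j _; exact: sqr_ge0.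
  have -> : B = 0 by rewrite /B big1 // => i _; rewrite a0 mul0r.
  by rewrite A00 expr0n /= mul0r.
have Ap' : 0 < A by rewrite lt_def Ap A0.
pose t := - B / A.
have tA : t * A = - B by rewrite /t mulrAC -mulrA divff ?mulr1.
have := Pos t; rewrite mulr2n expr2.
nra.
Qed.

Lemma enorm_ge0 u : 0 <= enorm u.
Proof. exact: sqrtr_ge0. Qed.

Lemma enorm_tri u v : enorm (u + v) <= enorm u + enorm v.
Proof.
rewrite /enorm.
set A := \sum_i u i 0 ^+ 2; set C := \sum_i v i 0 ^+ 2.
set B := \sum_i u i 0 * v i 0.
have A0 : 0 <= A by apply: sumr_ge0 => i _; exact: sqr_ge0.
have C0 : 0 <= C by apply: sumr_ge0 => i _; exact: sqr_ge0.
have E : \sum_i (u + v) i 0 ^+ 2 = A + B *+ 2 + C.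
  under eq_bigr do rewrite mxE sqrrD.
  by rewrite !big_split /= -mulr2n.
have HB : B <= Num.sqrt A * Num.sqrt C.
  rewrite -sqrtrM // ; apply: le_trans (ler_norm B) _.
  by rewrite -sqrtr_sqr ler_sqrt ?mulr_ge0 // CS.
rewrite E -[X in _ <= X]ger0_norm ?addr_ge0 ?sqrtr_ge0 // -sqrtr_sqr.
rewrite ler_sqrt ?sqr_ge0 // sqrrD !sqr_sqrtr //.
by rewrite lerD2r lerD2l lerMn2r.
Qed.

Lemma enormN u : enorm (- u) = enorm u.
Proof.
by rewrite /enorm; congr Num.sqrt; apply: eq_bigr => i _; rewrite mxE sqrrN.
Qed.

Lemma enorm_rev u v : `|enorm u - enorm v| <= enorm (u - v).
Proof.
rewrite ler_norml.
have H1 := enorm_tri (v - u) u; rewrite subrK -opprB enormN in H1.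
have H2 := enorm_tri (u - v) v; rewrite subrK in H2.
apply/andP; split; lra.
Qed.

Lemma sq_le_l1 (I : Type) (r : seq I) (F : I -> R) :
  \sum_(i <- r) F i ^+ 2 <= (\sum_(i <- r) `|F i|) ^+ 2.
Proof.
elim: r => [|a r IH]; first by rewrite !big_nil expr0n.
rewrite !big_cons sqrrD -real_normK ?num_real //.
have S0 : 0 <= \sum_(i <- r) `|F i| by apply: sumr_ge0.
have : 0 <= `|F a| * (\sum_(i <- r) `|F i|) *+ 2 by rewrite mulrn_wge0 // mulr_ge0.
lra.
Qed.

Lemma enorm_l1 u : enorm u <= \sum_i `|u i 0|.
Proof.
rewrite /enorm -[X in _ <= X]ger0_norm ?sumr_ge0 // -sqrtr_sqr ler_sqrt ?sqr_ge0 //.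
exact: sq_le_l1.
Qed.

End Enorm.


Lemma inf_close (L : Type) (Lam : set L) (F G : L -> R) d :
  Lam !=set0 -> (forall l, 0 <= F l) -> (forall l, 0 <= G l) ->
  (forall l, Lam l -> `|F l - G l| <= d) ->
  `|inf [set F l | l in Lam] - inf [set G l | l in Lam]| <= d.
Proof.
move=> [l0 Hl0] F0 G0 H.
have neF : [set F l | l in Lam] !=set0 by exists (F l0); exists l0.
have neG : [set G l | l in Lam] !=set0 by exists (G l0); exists l0.
have lbF : has_lbound [set F l | l in Lam] by exists 0 => _ [l _ <-].
have lbG : has_lbound [set G l | l in Lam] by exists 0 => _ [l _ <-].
have h1 : inf [set F l | l in Lam] - d <= inf [set G l | l in Lam].
  apply: lb_le_inf => // _ [l Hl <-].
  have := ge_inf lbF (ex_intro2 _ _ l Hl erefl).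
  have := H l Hl; rewrite ler_norml => /andP[a b]; lra.
have h2 : inf [set G l | l in Lam] - d <= inf [set F l | l in Lam].
  apply: lb_le_inf => // _ [l Hl <-].
  have := ge_inf lbG (ex_intro2 _ _ l Hl erefl).
  have := H l Hl; rewrite ler_norml => /andP[a b]; lra.
rewrite ler_norml; apply/andP; split; lra.
Qed.

Definition simplex N := [set lam : 'I_N -> R | (forall i, 0 <= lam i) /\ \sum_i lam i = 1].
Arguments simplex : clear implicits.

Lemma simplex_ne N : (0 < N)%N -> simplex N !=set0.
Proof.
move=> N0; pose i0 : 'I_N := Ordinal N0.
exists (fun i => (i == i0)%:R); split => [i|]; first exact: ler0n.
rewrite (bigD1 i0) //= ?eqxx big1 ?addr0 // => i /negbTE ->.
by [].
Qed.

Lemma simplex_le1 N lam i : simplex N lam -> lam i <= 1.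
Proof.
move=> [l0 l1]; rewrite -l1.
exact: (term_le_sum (F := lam) i l0).
Qed.

Lemma conv_img N m (M : 'M[R]_m) (x : 'cV[R]_m) (w : 'I_N -> 'cV[R]_m) :
  [set enorm (M *m (x - z)) | z in conv_pts w] =
  [set enorm (M *m x - \sum_i lam i *: (M *m w i)) | lam in simplex N].
Proof.
have E : forall lam, M *m (x - \sum_i lam i *: w i) = M *m x - \sum_i lam i *: (M *m w i).
  move=> lam; rewrite mulmxBr mulmx_sumr; congr (_ - _).
  by apply: eq_bigr => i _; rewrite scalemxAr.
apply/seteqP; split => y [z].
  move=> [lam [l0 [l1 ->]]] <-; exists lam; first by split.
  by rewrite E.
move=> [l0 l1] <-; exists (\sum_i z i *: w i); last by rewrite E.
by exists z.
Qed.

Lemma g_bound N m (M M0 : 'M[R]_m) (x x0 : 'cV[R]_m) (w w0 : 'I_N -> 'cV[R]_m) :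
  (0 < N)%N ->
  `|inf [set enorm (M0 *m (x0 - z)) | z in conv_pts w0] -
    inf [set enorm (M *m (x - z)) | z in conv_pts w]| <=
  \sum_j `|(M *m x) j 0 - (M0 *m x0) j 0| +
  \sum_j \sum_i `|(M *m w i) j 0 - (M0 *m w0 i) j 0|.
Proof.
move=> N0; rewrite !conv_img.
apply: inf_close; [exact: simplex_ne|move=> ?; exact: enorm_ge0|move=> ?; exact: enorm_ge0|].
move=> lam Hl.
apply: le_trans (enorm_rev _ _) _.
apply: le_trans (enorm_l1 _) _.
rewrite -big_split /=; apply: ler_sum => j _.
rewrite !mxBE !summxE.
set a := (M *m x) j 0; set a0 := (M0 *m x0) j 0.
have -> : a0 - \sum_i (lam i *: (M0 *m w0 i)) j 0 - (a - \sum_i (lam i *: (M *m w i)) j 0)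
    = - (a - a0) + \sum_i lam i * ((M *m w i) j 0 - (M0 *m w0 i) j 0).
  have e1 : \sum_i (lam i *: (M0 *m w0 i)) j 0 = \sum_i lam i * (M0 *m w0 i) j 0.
    by apply: eq_bigr => i _; rewrite mxE.
  have e2 : \sum_i (lam i *: (M *m w i)) j 0 = \sum_i lam i * (M *m w i) j 0.
    by apply: eq_bigr => i _; rewrite mxE.
  have e3 : \sum_i lam i * ((M *m w i) j 0 - (M0 *m w0 i) j 0) =
      \sum_i lam i * (M *m w i) j 0 - \sum_i lam i * (M0 *m w0 i) j 0.
    by rewrite -sumrB; apply: eq_bigr => i _; rewrite mulrBr.
  rewrite e1 e2 e3; lra.
apply: le_trans (ler_normD _ _) _; rewrite normrN lerD2l.
apply: le_trans (ler_norm_sum _ _ _) _; apply: ler_sum => i _.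
rewrite normrM ger0_norm; last by case: Hl.
rewrite -[X in _ <= X]mul1r; apply: ler_wpM2r => //.
exact: simplex_le1.
Qed.


Lemma nbhs_fst m (p0 : R * 'cV[R]_m) (U : set R) :
  nbhs p0.1 U -> nbhs p0 (fun p : R * 'cV[R]_m => U p.1).
Proof. by move=> HU; exact: (@cvg_fst _ _ (nbhs p0.1) (nbhs p0.2) _ U HU). Qed.

Lemma nbhs_snd m (p0 : R * 'cV[R]_m) (U : set 'cV[R]_m) :
  nbhs p0.2 U -> nbhs p0 (fun p : R * 'cV[R]_m => U p.2).
Proof. by move=> HU; exact: (@cvg_snd _ _ (nbhs p0.1) (nbhs p0.2) _ U HU). Qed.

Lemma lift_fst T (g : R -> R) m (p0 : R * 'cV[R]_m) : cw T g -> 0 <= p0.1 <= T ->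
  (fun p : R * 'cV[R]_m => g p.1) @ within [set p | 0 <= p.1 <= T] (nbhs p0) --> g p0.1.
Proof.
move=> Hg p0in Q HQ.
have := Hg _ p0in Q HQ; rewrite /within /= => H.
apply: filterS (nbhs_fst H) => p /= HU Sp; apply: HU.
by rewrite in_itv.
Qed.

Lemma lift_snd T m (p0 : R * 'cV[R]_m) k :
  (fun p : R * 'cV[R]_m => p.2 k 0) @ within [set p | 0 <= p.1 <= T] (nbhs p0) --> p0.2 k 0.
Proof.
move=> Q HQ.
have := @coord_continuous R m 1 k 0 p0.2 Q HQ => H.
rewrite /within /=; apply: filterS (nbhs_snd H) => p HU _; exact: HU.
Qed.

End Aux.

Unset Implicit Arguments.

Theorem lemma6 (R : realType) (n m l : nat) (T : R)
  (A : R -> 'M[R]_(n, n)) (B : R -> 'M[R]_(n, m)) (E : R -> 'M[R]_(n, l))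
  (U : set 'cV[R]_m) (D : set 'cV[R]_l)
  (Phi : R -> R -> 'M[R]_n)
  (Lg gam : R) (nk : nat) (xbar : 'I_nk -> 'cV[R]_n)
  (w : 'I_nk -> R -> 'cV[R]_n) (xi : 'I_nk -> R -> 'cV[R]_n) :
  0 < T ->
  {within `[0, T], continuous A} ->
  {within `[0, T], continuous B} ->
  {within `[0, T], continuous E} ->
  compact U -> convex_set U -> U !=set0 ->
  compact D -> convex_set D -> D !=set0 ->
  (forall t, 0 <= t <= T ->
     mink_diff (mx_image (B t) U) (mx_image (- E t) D) !=set0) ->
  is_stm T A Phi ->
  0 <= Lg -> (0 < nk)%N ->
  (forall i, adm_ctrl T
     (fun t => mink_diff (mx_image (B t) U) (mx_image (- E t) D)) (w i)) ->
  (forall i, is_sol T A (w i) (xbar i) (xi i)) ->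
  {within [set p : R * 'cV[R]_n | 0 <= p.1 <= T], continuous
     (fun p : R * 'cV[R]_n =>
        Lg * inf [set enorm (Phi T p.1 *m (p.2 - z)) | z in
                   conv_pts (fun i => xi i p.1)] + gam)}.
Proof.
move=> T0 HA _ _ _ _ _ _ _ _ _ HS Lg0 nk0 _ Hxi.
have T0' : 0 <= T := ltW T0.
have hTT : 0 <= T <= T by rewrite T0' lexx.
have Mc : forall i j, cw T (fun t => Phi T t i j) := stm_cont T0 HA HS.
have xic : forall i j, cw T (fun t => xi i t j 0).
  move=> i j; have [Hint Hrep] := Hxi i.
  apply: (@cw_eq _ _ _ (fun t => xbar i j 0 + oint T t (fun s => (A s *m xi i s + w i s) j 0))).
    by move=> t tin; rewrite Hrep.
  apply: cw_D; first exact: cw_cst.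
  by apply: cw_oint => //; exact: Hint.
have vc : forall i j, cw T (fun t => (Phi T t *m xi i t) j 0).
  move=> i j; apply: (@cw_eq _ _ _ (fun t => \sum_k Phi T t j k * xi i t k 0)).
    by move=> t _; rewrite mxE.
  by apply: cw_sum => k; apply: cw_M.
apply/subspace_continuousP => p0 Sp0.
pose d (p : R * 'cV[R]_n) :=
  \sum_j `|(Phi T p.1 *m p.2) j 0 - (Phi T p0.1 *m p0.2) j 0| +
  \sum_j \sum_i `|(Phi T p.1 *m xi i p.1) j 0 - (Phi T p0.1 *m xi i p0.1) j 0|.
have d0 : d p0 = 0.
  rewrite /d big1 ?add0r; last by move=> j _; rewrite subrr normr0.
  by rewrite big1 // => j _; rewrite big1 // => i _; rewrite subrr normr0.
have dcv : d p @[p --> within [set p : R * 'cV[R]_n | 0 <= p.1 <= T] (nbhs p0)] --> d p0.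
  apply: cvgD.
    apply: cvg_bsum => j; apply: cvg_norm; apply: cvgB; last exact: cvg_cst.
    rewrite mxE; under eq_fun do rewrite mxE.
    apply: cvg_bsum => k; apply: (@cvgM _ _ _ _ (fun p : R * 'cV[R]_n => Phi T p.1 j k) (fun p : R * 'cV[R]_n => p.2 k 0)).
      exact: (lift_fst (Mc j k) Sp0).
    exact: lift_snd.
  apply: cvg_bsum => j; apply: cvg_bsum => i; apply: cvg_norm; apply: cvgB; last exact: cvg_cst.
  exact: (lift_fst (vc i j) Sp0).
rewrite d0 in dcv.
apply/cvgrPdist_le => e e0.
have e' : 0 < e / (Lg + 1) by rewrite divr_gt0 // ltr_wpDl.
move/cvgrPdist_le: dcv => /(_ _ e').
apply: filterS => p Hp.
have gb := g_bound (Phi T p.1) (Phi T p0.1) p.2 p0.2 (fun i => xi i p.1) (fun i => xi i p0.1) nk0.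
have dp0 : 0 <= d p.
  by rewrite /d addr_ge0 //; do ? apply: sumr_ge0 => ? _.
rewrite sub0r normrN ger0_norm // ler_pdivlMr ?ltr_wpDl // in Hp.
set a := inf _ in gb; set b := inf _ in gb.
rewrite -/a -/b.
have -> : Lg * a + gam - (Lg * b + gam) = Lg * (a - b) by rewrite mulrBr; lra.
rewrite normrM ger0_norm //.
have : `|a - b| <= d p by exact: gb.
have := normr_ge0 (a - b).
nra.
Qed.
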